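(* For every $n\ge 2$, letting $P_n$ denote the path on $n$ vertices: (i) ${\rm I}_e(P_n)=\frac{n-1}{3}$ if $n\equiv 1 \pmod 3$; (ii) ${\rm I}_e(P_n)=\left\lceil\frac{n-1}{3}\right\rceil$ if $n\equiv 2 \pmod 3$; (iii) ${\rm I}_e(P_n)=\left\lfloor\frac{n-1}{3}\right\rfloor$ if $n\equiv 0\pmod 3$. Moreover, for every $n\ge 3$, letting $C_n$ denote the cycle on $n$ vertices, ${\rm I}_e(C_n)={\rm I}_e(P_n)+1$.
   Context: All graphs are finite and simple. A graph is locally irregular if no two adjacent vertices have the same degree. An edge-irregulator of a graph $G$ is a set $S\subseteq E(G)$ such that $G-S$ is locally irregular; ${\rm I}_e(G)$ is the minimum cardinality of an edge-irregulator of $G$. *)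

(* Defs.v *)
From mathcomp Require Import all_boot.
Set Implicit Arguments. Unset Strict Implicit. Unset Printing Implicit Defensive.

(* A finite simple graph on vertex type T is given by a symmetric irreflexive
   adjacency relation adj : rel T.  Edges are the 2-element vertex sets {x,y}. *)

Section Graphs.
Variable T : finType.
Variable adj : rel T.

Definition edge_set : {set {set T}} :=
  [set [set x; y] | x in T, y in T & adj x y].

Definition adj_minus (S : {set {set T}}) : rel T :=
  fun x y => adj x y && ([set x; y] \notin S).

Definition deg (r : rel T) (x : T) : nat := #|[set y | r x y]|.

Definition locally_irregularb (r : rel T) : bool :=
  [forall x, forall y, r x y ==> (deg r x != deg r y)].

(* The whole edge set is
   always an edge-irregulator (G - E(G) has no edges), so the default value
   #|edge_set| of the min-fold is attained and this is the true minimum. *)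
Definition Ie : nat :=
  \big[minn/#|edge_set|]_(S in powerset edge_set
                          | locally_irregularb (adj_minus S)) #|S|.

End Graphs.

Definition path_adj (n : nat) : rel 'I_n :=
  fun i j => (i.+1 == j :> nat) || (j.+1 == i :> nat).

Definition cycle_adj (n : nat) : rel 'I_n :=
  fun i j => (j == i.+1 %% n :> nat) || (i == j.+1 %% n :> nat).

Arguments path_adj n : clear implicits.
Arguments cycle_adj n : clear implicits.

Definition ceil_div (a b : nat) : nat := (a + b - 1) %/ b.

(* Main.v *)
Require Import Defs.
From mathcomp Require Import all_boot zify.
Set Implicit Arguments. Unset Strict Implicit. Unset Printing Implicit Defensive.

Lemma Ie_eq (T : finType) (adj : rel T) (f : nat) :
  (exists2 S : {set {set T}}, S \subset edge_set adj &
      locally_irregularb (adj_minus adj S) /\ #|S| = f) ->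
  (forall S : {set {set T}}, S \subset edge_set adj -> locally_irregularb (adj_minus adj S) -> f <= #|S|) ->
  Ie adj = f.
Proof.
move=> [S0 sub0 [irr0 c0]] lb; apply/eqP; rewrite eqn_leq; apply/andP; split.
  rewrite /Ie -c0.
  have : S0 \in index_enum {set {set T}} by rewrite mem_index_enum.
  have : (S0 \in powerset (edge_set adj)) && locally_irregularb (adj_minus adj S0).
    by rewrite powersetE sub0.
  elim: (index_enum _) => [//|a r IH] PS0; rewrite inE big_cons.
  case/orP => [/eqP <-|ins]; first by rewrite PS0 geq_minl.
  by case: ifP => _; [rewrite geq_min IH ?orbT|apply: IH].
rewrite /Ie; elim/big_ind: _ => //.
- apply: lb => //; apply/forallP => x; apply/forallP => y; apply/implyP.
  by rewrite /adj_minus; case/andP=> a; rewrite /edge_set; case/negP; apply/imset2P;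
     exists x y; rewrite ?inE.
- by move=> a b ha hb; rewrite leq_min ha hb.
- by move=> S; rewrite powersetE => /andP[]; apply: lb.
Qed.

Lemma deg2 n (r : rel 'I_n) (x : 'I_n) (a b : nat) (p q : bool) :
  (forall y : 'I_n, r x y = ((val y == a) && p) || ((val y == b) && q)) ->
  (p -> q -> a != b) -> (p -> a < n) -> (q -> b < n) -> deg r x = p + q.
Proof.
rewrite /deg; case: p; case: q => hr hab ha hb /=.
- have -> : [set y | r x y] = [set Ordinal (ha isT); Ordinal (hb isT)].
    by apply/setP => y; rewrite !inE hr !andbT -!val_eqE.
  by rewrite cards2 -val_eqE /= hab.
- have -> : [set y | r x y] = [set Ordinal (ha isT)].
    by apply/setP => y; rewrite !inE hr !andbT andbF orbF -!val_eqE.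
  by rewrite cards1.
- have -> : [set y | r x y] = [set Ordinal (hb isT)].
    by apply/setP => y; rewrite !inE hr !andbT andbF -!val_eqE.
  by rewrite cards1.
- have -> : [set y | r x y] = set0.
    by apply/setP => y; rewrite !inE hr !andbF.
  by rewrite cards0.
Qed.

Section Count.
Variables (T : finType) (adj : rel T) (m : nat) (E : nat -> {set T}).
Hypothesis Hedge : forall X, X \in edge_set adj -> exists2 i, i < m & X = E i.
Hypothesis Hedge2 : forall i, i < m -> E i \in edge_set adj.
Hypothesis Hinj : forall i j, i < m -> j < m -> E i = E j -> i = j.

Lemma card_edges (S : {set {set T}}) : S \subset edge_set adj ->
  #|S| = m - \sum_(i < m) (E i \notin S).
Proof.
move=> sub.
have eS : S = [set E (val i) | i in [set i : 'I_m | E i \in S]].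
  apply/setP => X; apply/idP/idP.
    move=> XS; have [i im eX] := Hedge (subsetP sub X XS).
    by apply/imsetP; exists (Ordinal im); rewrite // inE -eX.
  by case/imsetP => i; rewrite inE => h ->.
rewrite {1}eS card_in_imset; last first.
  by move=> i j _ _ h; apply: val_inj; apply: Hinj => //; apply: ltn_ord.
have h1 : \sum_(i < m) (E i \in S) + \sum_(i < m) (E i \notin S) = m.
  rewrite -big_split /= (eq_bigr (fun _ => 1)); last by move=> i _; case: (E i \in S).
  by rewrite sum1_card card_ord.
suff -> : #|[set i : 'I_m | E i \in S]| = \sum_(i < m) (E i \in S) by move: h1; lia.
rewrite -sum1_card big_mkcond /=.
by apply: eq_bigr => i _; rewrite inE; case: (E i \in S).
Qed.

Definition mkS (keep : nat -> bool) : {set {set T}} :=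
  [set E (val i) | i in [set i : 'I_m | ~~ keep i]].

Lemma mkS_sub (keep : nat -> bool) : mkS keep \subset edge_set adj.
Proof. by apply/subsetP => X /imsetP [i _ ->]; apply/Hedge2/ltn_ord. Qed.

Lemma mkS_notin (keep : nat -> bool) k : k < m -> (E k \notin mkS keep) = keep k.
Proof.
move=> km; apply/idP/idP.
  apply: contraR => nk; apply/imsetP; exists (Ordinal km) => //; by rewrite inE.
move=> kk; apply/imsetP => [[i]]; rewrite inE => ni /Hinj h.
by move: ni; rewrite -h ?kk // ltn_ord.
Qed.

End Count.

Lemma seg0 (c : nat -> bool) N : c 0 = false -> c N = false ->
  (forall i, 0 < i < N -> c i -> c i.-1 != c i.+1) ->
  \sum_(0 <= i < N) c i <= 2 * (N %/ 3).
Proof.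
move=> c0 cN hc.
suff H : forall k, k <= N -> c k = false -> \sum_(0 <= i < k) c i <= 2 * (k %/ 3).
  by apply: H.
elim/ltn_ind => k IH kN ck.
case: k IH kN ck => [|k] IH kN ck; first by rewrite big_geq.
rewrite big_nat_recr //=.
case ck1 : (c k).
  case: k IH kN ck ck1 => [|k] IH kN ck ck1; first by rewrite c0 in ck1.
  have h1 := hc k.+1; rewrite /= ck ck1 in h1.
  have ck2 : c k by have := h1 ltac:(lia) isT; case: (c k).
  case: k IH kN ck ck1 h1 ck2 => [|k] IH kN ck ck1 h1 ck2; first by rewrite c0 in ck2.
  have h2 := hc k.+1; rewrite /= ck1 ck2 in h2.
  have ck3 : c k = false by have := h2 ltac:(lia) isT; case: (c k).
  rewrite !big_nat_recr //= ck2 ck3.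
  have := IH k (ltac:(lia)) (ltac:(lia)) ck3; lia.
have := IH k (ltac:(lia)) (ltac:(lia)) ck1; lia.
Qed.

Lemma sum_shift (f : nat -> bool) N j : (forall i, f (i + N) = f i) ->
  \sum_(0 <= i < N) f (j + i) = \sum_(0 <= i < N) f i.
Proof.
move=> per; elim: j => [//|j IH].
rewrite -IH.
have e1 : \sum_(0 <= i < N.+1) f (j + i) = f j + \sum_(0 <= i < N) f (j.+1 + i).
  rewrite big_nat_recl //= addn0; congr (_ + _); apply: eq_bigr => i _; by rewrite addSnnS.
have e2 : \sum_(0 <= i < N.+1) f (j + i) = \sum_(0 <= i < N) f (j + i) + f j.
  by rewrite big_nat_recr //= per.
lia.
Qed.

Definition patc (M v : nat) : bool := (v %% 3 != 0) && (v < 3 * (M %/ 3)).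

Lemma sum_patc n : \sum_(0 <= v < n) patc n v = 2 * (n %/ 3).
Proof.
have h : forall q, \sum_(0 <= v < 3 * q) (v %% 3 != 0) = 2 * q.
  elim=> [|q IH]; first by rewrite big_geq.
  rewrite (_ : 3 * q.+1 = (3 * q).+3) ?mulnS // !big_nat_recr //= IH.
  have -> : (3 * q) %% 3 = 0 by lia.
  have -> : (3 * q).+1 %% 3 = 1 by lia.
  have -> : (3 * q).+2 %% 3 = 2 by lia.
  by rewrite /=; lia.
rewrite (big_cat_nat _ (n := 3 * (n %/ 3))) //=; last by lia.
rewrite [X in _ + X]big1_seq; last first.
  move=> i /andP[_]; rewrite mem_index_iota /patc => /andP[h1 _].
  have -> : i < 3 * (n %/ 3) = false by lia.
  by rewrite andbF.
suff -> : \sum_(0 <= i < 3 * (n %/ 3)) patc n i = 2 * (n %/ 3) by lia.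
rewrite -(h (n %/ 3)); apply: eq_big_nat => i hi.
rewrite /patc; have -> : i < 3 * (n %/ 3) by lia.
by rewrite andbT.
Qed.
Section Path.
Variable n : nat.

Definition Ep (i : nat) : {set 'I_n} := [set y : 'I_n | (nat_of_ord y == i) || (nat_of_ord y == i.+1)].
Definition cp (S : {set {set 'I_n}}) (v : nat) : bool := (0 < v < n) && (Ep v.-1 \notin S).

Lemma Ep2 (a b : 'I_n) : nat_of_ord b = (nat_of_ord a).+1 -> [set a; b] = Ep a.
Proof. by move=> h; apply/setP => z; rewrite !inE -!val_eqE /= h. Qed.

Lemma path_adjm S (x y : 'I_n) : adj_minus (path_adj n) S x y =
  ((nat_of_ord y == (nat_of_ord x).-1) && cp S x) || ((nat_of_ord y == (nat_of_ord x).+1) && cp S (nat_of_ord x).+1).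
Proof.
rewrite /adj_minus /path_adj /cp.
case: (boolP ((nat_of_ord x).+1 == nat_of_ord y)) => [/eqP h|h1] /=.
  rewrite (Ep2 (esym h)) /=.
  have -> : (nat_of_ord y == (nat_of_ord x).-1) = false by lia.
  have -> : nat_of_ord y == (nat_of_ord x).+1 by lia.
  have -> : (nat_of_ord x).+1 < n by have := ltn_ord y; lia.
  by [].
case: (boolP ((nat_of_ord y).+1 == nat_of_ord x)) => [/eqP h|h2] /=.
  rewrite setUC (Ep2 (esym h)) /=.
  have -> : (nat_of_ord y == (nat_of_ord x).+1) = false by lia.
  have -> : nat_of_ord y == (nat_of_ord x).-1 by lia.
  have -> : 0 < nat_of_ord x < n by have := ltn_ord x; lia.
  by rewrite orbF -h.
by apply/esym/norP; split; apply/negP => /and3P[/eqP e e2 e3]; lia.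
Qed.

Lemma path_deg S (x : 'I_n) : deg (adj_minus (path_adj n) S) x = cp S x + cp S (nat_of_ord x).+1.
Proof.
apply: deg2; first exact: path_adjm.
- by move=> /andP[/andP[h _] _]; lia.
- by move=> _; have := ltn_ord x; lia.
- by move=> /andP[/andP[_ h] _].
Qed.

Lemma path_irr1 S : locally_irregularb (adj_minus (path_adj n) S) ->
  forall i, 0 < i < n -> cp S i -> cp S i.-1 != cp S i.+1.
Proof.
move=> /forallP H i hi ci.
have h1 : i.-1 < n by lia.
have h2 : i < n by lia.
have := H (Ordinal h1) => /forallP /(_ (Ordinal h2)) /implyP.
rewrite path_adjm !path_deg /=.
have -> : i.-1.+1 = i by lia.
rewrite eqxx ci orbT => /(_ isT).
by case: (cp S i.-1); case: (cp S i.+1).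
Qed.

Lemma path_irr2 S : (forall i, 0 < i < n -> cp S i -> cp S i.-1 != cp S i.+1) ->
  locally_irregularb (adj_minus (path_adj n) S).
Proof.
move=> H; apply/forallP => x; apply/forallP => y; apply/implyP.
rewrite path_adjm !path_deg.
case/orP => /andP[/eqP ey c].
  have hx : 0 < nat_of_ord x < n by move: c => /andP[/andP[h _] _]; have := ltn_ord x; lia.
  have := H _ hx c; rewrite ey /=.
  have -> : (nat_of_ord x).-1.+1 = nat_of_ord x by lia.
  rewrite c.
  by case: (cp S (nat_of_ord x).-1); case: (cp S (nat_of_ord x).+1).
have hx : 0 < (nat_of_ord x).+1 < n by move: c => /andP[/andP[_ h] _].
have := H _ hx c; rewrite ey /= c.
by case: (cp S (nat_of_ord x)); case: (cp S (nat_of_ord x).+2).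
Qed.

Lemma path_edge X : X \in edge_set (path_adj n) -> exists2 i, i < n.-1 & X = Ep i.
Proof.
case/imset2P => x y _; rewrite inE /path_adj => /orP[] /eqP h ->.
  exists (nat_of_ord x); first by have := ltn_ord y; lia.
  exact: Ep2.
exists (nat_of_ord y); first by have := ltn_ord x; lia.
by rewrite setUC; apply: Ep2.
Qed.

Lemma path_edge2 i : i < n.-1 -> Ep i \in edge_set (path_adj n).
Proof.
move=> hi.
have h1 : i < n by lia.
have h2 : i.+1 < n by lia.
apply/imset2P; exists (Ordinal h1) (Ordinal h2) => //.
  by rewrite inE /path_adj /= eqxx.
by rewrite (Ep2 (a := Ordinal h1) (b := Ordinal h2)).
Qed.

Lemma path_inj i j : i < n.-1 -> j < n.-1 -> Ep i = Ep j -> i = j.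
Proof.
move=> hi hj e.
have h1 : i < n by lia.
have h2 : i.+1 < n by lia.
move/setP: e => e.
have := e (Ordinal h1); have := e (Ordinal h2); rewrite !inE /= !eqxx /= ?orbT.
lia.
Qed.

End Path.

Lemma patc_irr n i : patc n i -> patc n i.-1 != patc n i.+1.
Proof. rewrite /patc; lia. Qed.

Lemma path_Ie n : 2 <= n -> Ie (path_adj n) = n.-1 - 2 * (n %/ 3).
Proof.
case: n => [//|n'] n2; set n := n'.+1.
have Hc := card_edges (@path_edge n) (@path_inj n).
have sumE : forall S : {set {set 'I_n}}, \sum_(i < n.-1) (Ep n i \notin S) = \sum_(0 <= v < n) cp S v.
  move=> S; rewrite big_mkord.
  rewrite big_ord_recl /cp /=; apply: eq_bigr => i _.
  by rewrite /bump leq0n add1n add0n ltnS ltn_ord.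
apply: (@Ie_eq _ (path_adj n)).
  set S0 := mkS n.-1 (Ep n) (fun i => patc n i.+1).
  have sub0 : S0 \subset edge_set (path_adj n) by apply: mkS_sub; exact: path_edge2.
  have cpE : forall v, cp S0 v = patc n v.
    move=> v; rewrite /cp.
    case: (boolP (0 < v < n)) => hv /=.
      rewrite mkS_notin //.
      - by have -> : v.-1.+1 = v by lia.
      - exact: path_inj.
      - by rewrite /n; lia.
    by apply/esym/negbTE; rewrite /patc; lia.
  exists S0 => //; split.
    apply: path_irr2 => i _; rewrite !cpE; exact: patc_irr.
  rewrite (Hc _ sub0) sumE.
  under eq_big_nat => v _ do rewrite cpE.
  by rewrite sum_patc.
move=> S sub irr.
rewrite (Hc _ sub) sumE.
have c0 : cp S 0 = false by [].
have cN : cp S n = false by rewrite /cp ltnn andbF.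
have := seg0 c0 cN (path_irr1 irr); lia.
Qed.

Lemma modS_case n k : k < n -> k.+1 %% n = if k.+1 < n then k.+1 else 0.
Proof.
move=> kn; case: ifP => h; first by rewrite modn_small.
have -> : k.+1 = n by lia.
by rewrite modnn.
Qed.

Lemma modP_case n x : x < n -> (x + n.-1) %% n = if x == 0 then n.-1 else x.-1.
Proof.
move=> xn; case: ifP => [/eqP ->|h]; first by rewrite add0n modn_small; lia.
have -> : x + n.-1 = x.-1 + n by lia.
by rewrite modnDr modn_small //; lia.
Qed.

Lemma mod_swap n (a b : nat) : a < n -> b < n ->
  (a == b.+1 %% n) = (b == (a + n.-1) %% n).
Proof.
move=> an bn; rewrite modS_case // modP_case //.
case: ifP => h1; case: ifP => h2; lia.
Qed.

Section Cycle.
Variable n : nat.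
Hypothesis n3 : 3 <= n.

Definition Ec (i : nat) : {set 'I_n} :=
  [set y : 'I_n | (nat_of_ord y == i %% n) || (nat_of_ord y == i.+1 %% n)].
Definition kc (S : {set {set 'I_n}}) (i : nat) : bool := Ec i \notin S.

Lemma Ec_mod i j : i %% n = j %% n -> Ec i = Ec j.
Proof.
move=> h; apply/setP => z; rewrite !inE h.
by rewrite -addn1 -modnDml h modnDml addn1.
Qed.

Lemma kc_mod S i j : i %% n = j %% n -> kc S i = kc S j.
Proof. by move=> h; rewrite /kc (Ec_mod h). Qed.

Lemma Ec2 (a b : 'I_n) : nat_of_ord b = (nat_of_ord a).+1 %% n -> [set a; b] = Ec a.
Proof.
by move=> h; apply/setP => z; rewrite !inE -!val_eqE /= h (modn_small (ltn_ord a)).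
Qed.

Lemma cyc_adjm S (x y : 'I_n) : adj_minus (cycle_adj n) S x y =
  ((nat_of_ord y == (nat_of_ord x + n.-1) %% n) && kc S (nat_of_ord x + n.-1)) ||
  ((nat_of_ord y == (nat_of_ord x).+1 %% n) && kc S x).
Proof.
have xn := ltn_ord x; have yn := ltn_ord y.
rewrite /adj_minus /cycle_adj /kc.
case: (boolP (nat_of_ord y == (nat_of_ord x).+1 %% n)) => [/eqP h|h1] /=.
  rewrite (Ec2 h) /=.
  have -> : (nat_of_ord y == (nat_of_ord x + n.-1) %% n) = false.
    move: h; rewrite modS_case // modP_case //.
    case: ifP => h2; case: ifP => h3; lia.
  by [].
rewrite orbF.
rewrite -mod_swap //.
case: (boolP (nat_of_ord x == (nat_of_ord y).+1 %% n)) => [/eqP h|h2] /=.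
  rewrite setUC (Ec2 h).
  have e : (nat_of_ord y) %% n = (nat_of_ord x + n.-1) %% n.
    rewrite (modn_small yn); apply/eqP; rewrite -mod_swap //; exact/eqP.
  by rewrite (Ec_mod e).
by [].
Qed.

Lemma cyc_deg S (x : 'I_n) :
  deg (adj_minus (cycle_adj n) S) x = kc S (nat_of_ord x + n.-1) + kc S x.
Proof.
have xn := ltn_ord x.
apply: deg2; first exact: cyc_adjm.
- move=> _ _; rewrite modS_case // modP_case //.
  case: ifP => h2; case: ifP => h3; lia.
- by move=> _; rewrite ltn_mod; lia.
- by move=> _; rewrite ltn_mod; lia.
Qed.

Lemma cyc_irr1 S : locally_irregularb (adj_minus (cycle_adj n) S) ->
  forall x, x < n -> kc S x -> kc S (x + n.-1) != kc S x.+1.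
Proof.
move=> /forallP H x xn cx.
have yn : x.+1 %% n < n by rewrite ltn_mod; lia.
have := H (Ordinal xn) => /forallP /(_ (Ordinal yn)) /implyP.
rewrite cyc_adjm !cyc_deg /= eqxx cx orbT => /(_ isT).
have e1 : (x.+1 %% n + n.-1) %% n = x %% n.
  rewrite (modn_small xn); apply/esym/eqP; rewrite -mod_swap //.
rewrite (kc_mod S e1) (kc_mod S (esym (modn_mod x.+1 n))).
rewrite cx; by case: (kc S (x + n.-1)); case: (kc S (x.+1 %% n)).
Qed.

Lemma cyc_irr2 S : (forall x, x < n -> kc S x -> kc S (x + n.-1) != kc S x.+1) ->
  locally_irregularb (adj_minus (cycle_adj n) S).
Proof.
move=> H; apply/forallP => x; apply/forallP => y; apply/implyP.
have xn := ltn_ord x; have yn := ltn_ord y.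
rewrite cyc_adjm !cyc_deg.
case/orP => /andP[/eqP ey c].
  have c' : kc S y by rewrite ey (kc_mod S (modn_mod _ _)).
  have := H _ yn c'.
  have e1 : (nat_of_ord y).+1 %% n = nat_of_ord x %% n.
    rewrite (modn_small xn); apply/esym/eqP; by rewrite mod_swap // ey.
  rewrite (kc_mod S e1) c c'.
  by case: (kc S (nat_of_ord y + n.-1)); case: (kc S x).
have := H _ xn c.
have e1 : (nat_of_ord y + n.-1) %% n = nat_of_ord x %% n.
  rewrite (modn_small xn); apply/esym/eqP; by rewrite -mod_swap // ey.
have e2 : nat_of_ord y %% n = (nat_of_ord x).+1 %% n by rewrite ey modn_mod.
rewrite (kc_mod S e1) (kc_mod S e2) c.
by case: (kc S (nat_of_ord x + n.-1)); case: (kc S (nat_of_ord x).+1).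
Qed.

Lemma cyc_edge X : X \in edge_set (cycle_adj n) -> exists2 i, i < n & X = Ec i.
Proof.
case/imset2P => x y _; rewrite inE /cycle_adj => /orP[] /eqP h ->.
  by exists (nat_of_ord x) => //; apply: Ec2.
by exists (nat_of_ord y) => //; rewrite setUC; apply: Ec2.
Qed.

Lemma cyc_edge2 i : i < n -> Ec i \in edge_set (cycle_adj n).
Proof.
move=> hi.
have h2 : i.+1 %% n < n by rewrite ltn_mod; lia.
apply/imset2P; exists (Ordinal hi) (Ordinal h2) => //.
  by rewrite inE /cycle_adj /= eqxx.
by rewrite (Ec2 (a := Ordinal hi) (b := Ordinal h2)).
Qed.

Lemma cyc_inj i j : i < n -> j < n -> Ec i = Ec j -> i = j.
Proof.
move=> hi hj e.
have h2 : i.+1 %% n < n by rewrite ltn_mod; lia.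
move/setP: e => e.
have := e (Ordinal hi); have := e (Ordinal h2); rewrite !inE /= !eqxx /= ?orbT.
rewrite (modn_small hi) (modn_small hj) (@modS_case n i hi) (@modS_case n j hj).
case: ifP => h3; case: ifP => h4; lia.
Qed.

End Cycle.

Lemma cyc_Ie n : 3 <= n -> Ie (cycle_adj n) = n - 2 * (n %/ 3).
Proof.
move=> n3.
have Hc : forall S : {set {set 'I_n}}, S \subset edge_set (cycle_adj n) ->
    #|S| = n - \sum_(i < n) (Ec n i \notin S).
  by apply: card_edges; [exact: cyc_edge | exact: (cyc_inj n3)].
have sumE : forall S : {set {set 'I_n}},
    \sum_(i < n) (Ec n i \notin S) = \sum_(0 <= i < n) kc S i.
  by move=> S; rewrite big_mkord.
apply: (@Ie_eq _ (cycle_adj n)).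
  set S0 := mkS n (Ec n) (fun i => patc n i.+1).
  have sub0 : S0 \subset edge_set (cycle_adj n) by apply: mkS_sub; exact: (cyc_edge2 n3).
  have kcE : forall i, kc S0 i = patc n (i %% n).+1.
    move=> i; rewrite (kc_mod S0 (esym (modn_mod i n))) /kc mkS_notin //.
    - exact: (cyc_inj n3).
    - by rewrite ltn_mod; lia.
  exists S0 => //; split.
    apply: (cyc_irr2 n3) => x xn; rewrite !kcE (modn_small xn) (modP_case xn) (modS_case xn).
    by case: ifP => h1; case: ifP => h2; rewrite /patc; lia.
  rewrite (Hc _ sub0) sumE.
  rewrite (eq_big_nat _ _ (F2 := fun i => nat_of_bool (patc n i.+1))); last first.
    by move=> i /andP[_ hi]; rewrite kcE modn_small.
  have e1 : \sum_(0 <= i < n.+1) patc n i = patc n 0 + \sum_(0 <= i < n) patc n i.+1.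
    by rewrite big_nat_recl.
  have e2 : \sum_(0 <= i < n.+1) patc n i = \sum_(0 <= i < n) patc n i + patc n n.
    by rewrite big_nat_recr.
  have p0 : patc n 0 = false by [].
  have pn : patc n n = false by rewrite /patc; lia.
  rewrite p0 in e1; rewrite pn sum_patc in e2; lia.
move=> S sub irr.
rewrite (Hc _ sub) sumE.
have H := cyc_irr1 n3 irr.
have Hall : forall x, kc S x -> kc S (x + n.-1) != kc S x.+1.
  move=> x kx.
  have xn : x %% n < n by rewrite ltn_mod; lia.
  have e1 : (x %% n + n.-1) %% n = (x + n.-1) %% n by rewrite modnDml.
  have e2 : (x %% n).+1 %% n = x.+1 %% n by rewrite -[(x %% n).+1]addn1 -[x.+1]addn1 modnDml.
  have := H _ xn.
  by rewrite (kc_mod S (modn_mod x n)) (kc_mod S e1) (kc_mod S e2); apply.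
case: (boolP [exists j : 'I_n, ~~ kc S j]) => [/existsP[j kj] | /existsPn allk]; last first.
  have h1 : n.-1 < n by lia.
  have h2 : 1 < n by lia.
  have k1 := allk (Ordinal h1); have k2 := allk (Ordinal h2).
  rewrite negbK /= in k1; rewrite negbK /= in k2.
  have h0 : 0 < n by lia.
  have k0 := allk (Ordinal h0); rewrite negbK /= in k0.
  have := Hall 0 k0.
  by rewrite add0n k1 k2.
have per : forall i, kc S (i + n) = kc S i.
  by move=> i; apply: kc_mod; rewrite modnDr.
have d0 : kc S (j + 0) = false by rewrite addn0; apply/negbTE.
have dn : kc S (j + n) = false by rewrite per; apply/negbTE.
have hd : forall i, 0 < i < n -> kc S (j + i) -> kc S (j + i.-1) != kc S (j + i.+1).
  move=> i hi /Hall.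
  have -> : j + i + n.-1 = (j + i.-1) + n by lia.
  by rewrite per addnS.
have := @seg0 (fun i => kc S (j + i)) n d0 dn hd.
rewrite (sum_shift j per); lia.
Qed.

Theorem theorem4 :
  (forall n : nat, 2 <= n ->
     [/\ n %% 3 = 1 -> Ie (path_adj n) = (n - 1) %/ 3,
         n %% 3 = 2 -> Ie (path_adj n) = ceil_div (n - 1) 3
       & n %% 3 = 0 -> Ie (path_adj n) = (n - 1) %/ 3]) /\
  (forall n : nat, 3 <= n -> Ie (cycle_adj n) = Ie (path_adj n) + 1).
Proof.
split.
  move=> n n2; rewrite (path_Ie n2) /ceil_div; split; lia.
move=> n n3; rewrite (cyc_Ie n3) path_Ie; lia.
Qed.
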